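(* Let $(M,d)$ be a metric space and let $T:M\to M$ be a surjective uniformly asymptotically regular mapping. Then $T$ is the identity mapping on $M$.
   Context: A mapping $T:M\to M$ on a metric space $(M,d)$ is uniformly asymptotically regular (UAR) if $\lim_{n\to\infty}\sup_{x\in M} d(T^{n+1}x,T^{n}x)=0$, where $T^n$ is the $n$-fold composition of $T$. *)

(* Defs.v *)
From Stdlib Require Import Reals.
Open Scope R_scope.

Definition is_metric {M : Type} (d : M -> M -> R) : Prop :=
  (forall x y, 0 <= d x y) /\
  (forall x y, d x y = 0 <-> x = y) /\
  (forall x y, d x y = d y x) /\
  (forall x y z, d x z <= d x y + d y z).

Fixpoint iter_map {M : Type} (n : nat) (T : M -> M) (x : M) : M :=
  match n with
  | O => x
  | S k => T (iter_map k T x)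
  end.

(* Uniform asymptotic regularity: lim_n sup_x d(T^{n+1}x, T^n x) = 0.
   Written as the epsilon-N unfolding of "the sup tends to 0"
   (the sup being finite eventually is part of this). *)
Definition UAR {M : Type} (d : M -> M -> R) (T : M -> M) : Prop :=
  forall eps : R, 0 < eps ->
    exists N : nat, forall n : nat, (N <= n)%nat ->
      forall x : M, d (iter_map (S n) T x) (iter_map n T x) <= eps.

(* Main.v *)
Require Import Defs.
From Stdlib Require Import Reals Lra.
Open Scope R_scope.

Lemma iter_surj (M : Type) (T : M -> M) :
  (forall y : M, exists x : M, T x = y) ->
  forall n x, exists y, iter_map n T y = x.
Proof.
  intros Hs n. induction n as [|n IH]; intros x.
  - exists x; reflexivity.
  - destruct (Hs x) as [z Hz]. destruct (IH z) as [y Hy].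
    exists y. simpl. rewrite Hy. exact Hz.
Qed.

Theorem proposition2p2 (M : Type) (d : M -> M -> R) (T : M -> M) :
  is_metric d ->
  (forall y : M, exists x : M, T x = y) ->
  UAR d T ->
  forall x : M, T x = x.
Proof.
  intros [Hpos [Hzero _]] Hs Hu x.
  apply Hzero.
  assert (Hle : forall eps, 0 < eps -> d (T x) x <= eps).
  { intros eps He. destruct (Hu eps He) as [N HN].
    destruct (iter_surj M T Hs N x) as [y Hy].
    specialize (HN N (le_n N) y). simpl in HN. rewrite Hy in HN. exact HN. }
  specialize (Hpos (T x) x).
  destruct (Rle_lt_or_eq_dec 0 _ Hpos) as [Hlt|Heq]; [|auto].
  specialize (Hle (d (T x) x / 2) ltac:(lra)). lra.
Qed.
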